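(* Let $\dot E=(E,(C,S),(D,T))$ be a bi-separated graph with distinguished subsets. If $\dot E$ is tame, then $\dot E$ is the direct limit (union) of a directed family of finite complete sub-objects of $\dot E$. Conversely, if $\dot E$ is the direct limit (union) of a directed family of finite complete sub-objects, then $\dot E$ is tame.
   Context: A graph $E=(E^0,E^1,r,s)$ has vertex set $E^0$, edge set $E^1$, range and source maps $r,s:E^1\to E^0$. A bi-separated graph with distinguished subsets is $\dot E=(E,(C,S),(D,T))$ where: $C=\bigsqcup_{v}C_v$ with $C_v$ a partition of $s^{-1}(v)$ into nonempty subsets for each non-sink $v$; $D=\bigsqcup_v D_v$ with $D_v$ a partition of $r^{-1}(v)$ into nonempty subsets for each non-source $v$; $|X\cap Y|\le 1$ for all $X\in C$, $Y\in D$; $C_{\rm fin}=\{X\in C:|X|<\infty\}$, $D_{\rm fin}=\{Y\in D:|Y|<\infty\}$, and $S\subseteq C_{\rm fin}$, $T\subseteq D_{\rm fin}$. A complete sub-object of $\dot E$ is given by a subgraph $E'$ of $E$ (i.e. $(E')^0\subseteq E^0$, $(E')^1\subseteq E^1$ with $s(e),r(e)\in (E')^0$ for $e\in(E')^1$) such that every $X\in S$ with $X\cap (E')^1\neq\emptyset$ satisfies $X\subseteq (E')^1$ and every $Y\in T$ with $Y\cap(E')^1\ne\emptyset$ satisfies $Y\subseteq (E')^1$, equipped with $C'=\{X\cap(E')^1: X\in C\setminus S,\ X\cap (E')^1\neq\emptyset\}\sqcup S'$, $S'=\{X\in S: X\cap(E')^1\neq\emptyset\}$, $D'=\{Y\cap(E')^1:Y\in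 D\setminus T,\ Y\cap(E')^1\ne\emptyset\}\sqcup T'$, $T'=\{Y\in T:Y\cap (E')^1\neq\emptyset\}$. It is finite if $(E')^0$ and $(E')^1$ are finite. A family of complete sub-objects is directed if any two are contained in a third (as subgraphs); $\dot E$ is its direct limit (union) if every vertex and every edge of $E$ lies in some member of the family. Tameness: let $S_1=\{X\in S: X\cap Y\neq\emptyset \text{ for some } Y\in T\}$ and $T_1=\{Y\in T: X\cap Y\ne\emptyset\text{ for some }X\in S\}$. On $S_1$ define $X\sim_T X'$ if $X=X'$ or there is a sequence $X_0,Y_1,X_1,\dots,Y_n,X_n$ with $X_i\in S$, $Y_i\in T$, $X_0=X$, $X_n=X'$, $X_{i-1}\cap Y_i\ne\emptyset$ and $Y_i\cap X_i\neq\emptyset$ for all $i$; define $\sim_S$ on $T_1$ symmetrically (sequences $Y_0,X_1,Y_1,\dots$ with consecutive members intersecting). These are equivalence relations. $\dot E$ is tame if every $\sim_T$-class in $S_1$ and every $\sim_S$-class in $T_1$ is finite. *)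

(* Defs.v *)
From Stdlib Require Import List Relations.
Import ListNotations.

Definition fin_pred {A : Type} (P : A -> Prop) : Prop :=
  exists l : list A, forall a, P a -> In a l.

(* The partition C (resp. D) of the edges is given by a labelling
   cC : Ed -> IC (resp. cD : Ed -> ID): the members of C are the fibres
   X = cC^{-1}(i), i : IC (cC surjective, so every member is nonempty and
   distinct indices give distinct members).  Edges in the same C-member
   have the same source, so C restricts to a partition C_v of s^{-1}(v)
   for every non-sink v; symmetrically for D and ranges. *)
Record BiSepGraph := {
  V : Type;
  Ed : Type;
  src : Ed -> V;
  rng : Ed -> V;
  IC : Type;
  ID : Type;
  cC : Ed -> IC;
  cD : Ed -> ID;
  cC_surj : forall X : IC, exists e, cC e = X;
  cD_surj : forall Y : ID, exists e, cD e = Y;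
  cC_src : forall e e', cC e = cC e' -> src e = src e';
  cD_rng : forall e e', cD e = cD e' -> rng e = rng e';
  CD_inter : forall e e', cC e = cC e' -> cD e = cD e' -> e = e';
  S : IC -> Prop;
  T : ID -> Prop;
  S_fin : forall X, S X -> fin_pred (fun e => cC e = X);
  T_fin : forall Y, T Y -> fin_pred (fun e => cD e = Y)
}.

Arguments src {_} _. Arguments rng {_} _. Arguments cC {_} _. Arguments cD {_} _.
Arguments S {_} _. Arguments T {_} _.

Definition meets (G : BiSepGraph) (X : IC G) (Y : ID G) : Prop :=
  exists e, cC e = X /\ cD e = Y.

Definition stepT (G : BiSepGraph) (X X' : IC G) : Prop :=
  S X /\ S X' /\ exists Y, T Y /\ meets G X Y /\ meets G X' Y.

Definition stepS (G : BiSepGraph) (Y Y' : ID G) : Prop :=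
  T Y /\ T Y' /\ exists X, S X /\ meets G X Y /\ meets G X Y'.

Definition S1 (G : BiSepGraph) (X : IC G) : Prop :=
  S X /\ exists Y, T Y /\ meets G X Y.
Definition T1 (G : BiSepGraph) (Y : ID G) : Prop :=
  T Y /\ exists X, S X /\ meets G X Y.

Definition simT (G : BiSepGraph) : relation (IC G) := clos_refl_trans _ (stepT G).
Definition simS (G : BiSepGraph) : relation (ID G) := clos_refl_trans _ (stepS G).

Definition tame (G : BiSepGraph) : Prop :=
  (forall X, S1 G X -> fin_pred (fun X' => simT G X X')) /\
  (forall Y, T1 G Y -> fin_pred (fun Y' => simS G Y Y')).

Record subgraph (G : BiSepGraph) := {
  sV : V G -> Prop;
  sE : Ed G -> Prop;
  sE_src : forall e, sE e -> sV (src e);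
  sE_rng : forall e, sE e -> sV (rng e)
}.
Arguments sV {_} _ _. Arguments sE {_} _ _.

Definition complete_sub (G : BiSepGraph) (H : subgraph G) : Prop :=
  (forall X, S X -> (exists e, cC e = X /\ sE H e) ->
     forall e, cC e = X -> sE H e) /\
  (forall Y, T Y -> (exists e, cD e = Y /\ sE H e) ->
     forall e, cD e = Y -> sE H e).

Definition finite_sub (G : BiSepGraph) (H : subgraph G) : Prop :=
  fin_pred (sV H) /\ fin_pred (sE H).

Definition sub_le (G : BiSepGraph) (H K : subgraph G) : Prop :=
  (forall v, sV H v -> sV K v) /\ (forall e, sE H e -> sE K e).

Definition union_of_finite_complete (G : BiSepGraph) : Prop :=
  exists (I : Type) (F : I -> subgraph G),
    inhabited I /\
    (forall i, complete_sub G (F i) /\ finite_sub G (F i)) /\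
    (forall i j, exists k, sub_le G (F i) (F k) /\ sub_le G (F j) (F k)) /\
    (forall v, exists i, sV (F i) v) /\
    (forall e, exists i, sE (F i) e).

(* Main.v *)
Require Import Defs.
From Stdlib Require Import List Relations Classical.
Import ListNotations.

Lemma fin_sub {A} (P Q : A -> Prop) : fin_pred P -> (forall a, Q a -> P a) -> fin_pred Q.
Proof. intros [l Hl] H. exists l. auto. Qed.

Lemma fin_union {A} (P Q : A -> Prop) : fin_pred P -> fin_pred Q -> fin_pred (fun a => P a \/ Q a).
Proof.
  intros [l Hl] [m Hm]. exists (l ++ m). intros a [H|H]; apply in_or_app; auto.
Qed.

Lemma fin_single {A} (x : A) : fin_pred (fun a => a = x).
Proof. exists [x]. intros a ->. left; auto. Qed.

Lemma fin_empty {A} : fin_pred (fun _ : A => False).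
Proof. exists []. intros a []. Qed.

Lemma fin_big {A B} (P : A -> Prop) (Q : A -> B -> Prop) :
  fin_pred P -> (forall a, P a -> fin_pred (Q a)) ->
  fin_pred (fun b => exists a, P a /\ Q a b).
Proof.
  intros [l Hl] HQ.
  assert (K : forall l', exists m, forall a b, In a l' -> P a -> Q a b -> In b m).
  { induction l' as [|x l' IH].
    - exists []. intros a b [].
    - destruct IH as [m Hm].
      destruct (classic (P x)) as [Px|nPx].
      + destruct (HQ x Px) as [m' Hm']. exists (m' ++ m).
        intros a b [<-|Ha] Pa Qab; apply in_or_app; eauto.
      + exists m. intros a b [<-|Ha] Pa Qab; [contradiction|eauto]. }
  destruct (K l) as [m Hm]. exists m. intros b [a [Pa Qab]]. eauto.
Qed.

Lemma conv_T (G : BiSepGraph) (H : subgraph G) : complete_sub G H ->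
  forall X X', simT G X X' -> (exists g, cC g = X /\ sE H g) -> exists g, cC g = X' /\ sE H g.
Proof.
  intros [HS HT] X X' Hr. induction Hr as [x y Hs| x | x y z _ IH1 _ IH2]; auto.
  intros Hx. destruct Hs as [Sx [Sy [Y [TY [[h [h1 h2]] [k [k1 k2]]]]]]].
  exists k. split; auto. apply (HT Y TY); auto. exists h. split; auto.
  apply (HS x Sx Hx h h1).
Qed.

Lemma conv_S (G : BiSepGraph) (H : subgraph G) : complete_sub G H ->
  forall Y Y', simS G Y Y' -> (exists g, cD g = Y /\ sE H g) -> exists g, cD g = Y' /\ sE H g.
Proof.
  intros [HS HT] Y Y' Hr. induction Hr as [x y Hs| x | x y z _ IH1 _ IH2]; auto.
  intros Hx. destruct Hs as [Tx [Ty [X [SX [[h [h1 h2]] [k [k1 k2]]]]]]].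
  exists k. split; auto. apply (HS X SX); auto. exists h. split; auto.
  apply (HT x Tx Hx h h2).
Qed.

Lemma converse (G : BiSepGraph) : union_of_finite_complete G -> tame G.
Proof.
  intros [I [F [_ [HF [_ [_ He]]]]]]. split.
  - intros X _. destruct (cC_surj G X) as [f Hf]. destruct (He f) as [i Hi].
    destruct (HF i) as [Hc [_ [l Hl]]].
    exists (map cC l). intros X' HX'.
    destruct (conv_T G (F i) Hc X X' HX') as [g [<- Hg]]. eauto.
    apply in_map. auto.
  - intros Y _. destruct (cD_surj G Y) as [f Hf]. destruct (He f) as [i Hi].
    destruct (HF i) as [Hc [_ [l Hl]]].
    exists (map cD l). intros Y' HY'.
    destruct (conv_S G (F i) Hc Y Y' HY') as [g [<- Hg]]. eauto.
    apply in_map. auto.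
Qed.

Section Fwd.
Variable G : BiSepGraph.

Definition adj (g h : Ed G) : Prop :=
  (S (cC g) /\ cC g = cC h) \/ (T (cD g) /\ cD g = cD h).

Lemma simT_S1 X0 X : simT G X0 X -> X = X0 \/ S1 G X0.
Proof.
  intros H. apply clos_rt_rt1n in H. destruct H as [|y z Hs _]; auto.
  right. destruct Hs as [Sx [_ [Y [TY [M _]]]]]. split; eauto.
Qed.

Lemma simS_T1 Y0 Y : simS G Y0 Y -> Y = Y0 \/ T1 G Y0.
Proof.
  intros H. apply clos_rt_rt1n in H. destruct H as [|y z Hs _]; auto.
  right. destruct Hs as [Sx [_ [X [SX [M _]]]]]. split; eauto.
Qed.

Lemma keyT X0 X Y : simT G X0 X -> T Y -> meets G X Y ->
  exists Y1, T Y1 /\ meets G X0 Y1 /\ simS G Y1 Y.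
Proof.
  intros H. apply clos_rt_rt1n in H. induction H as [x|x y z Hs _ IH]; intros TY M.
  - exists Y. split; [|split]; auto. apply rt_refl.
  - destruct (IH TY M) as [Y1 [TY1 [M1 R1]]].
    destruct Hs as [Sx [Sy [Y' [TY' [Mx My]]]]].
    exists Y'. split; [|split]; auto.
    eapply rt_trans; [apply rt_step|exact R1].
    split; [|split]; auto. exists y. auto.
Qed.

Lemma keyS Y0 Y X : simS G Y0 Y -> S X -> meets G X Y ->
  exists X1, S X1 /\ meets G X1 Y0 /\ simT G X1 X.
Proof.
  intros H. apply clos_rt_rt1n in H. induction H as [x|x y z Hs _ IH]; intros SX M.
  - exists X. split; [|split]; auto. apply rt_refl.
  - destruct (IH SX M) as [X1 [SX1 [M1 R1]]].
    destruct Hs as [Tx [Ty [X' [SX' [Mx My]]]]].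
    exists X'. split; [|split]; auto.
    eapply rt_trans; [apply rt_step|exact R1].
    split; [|split]; auto. exists y. auto.
Qed.

Variable e : Ed G.

Definition Aset (X : IC G) : Prop := S X /\
  ((S (cC e) /\ simT G (cC e) X) \/
   (T (cD e) /\ exists X1, S X1 /\ meets G X1 (cD e) /\ simT G X1 X)).
Definition Bset (Y : ID G) : Prop := T Y /\
  ((T (cD e) /\ simS G (cD e) Y) \/
   (S (cC e) /\ exists Y1, T Y1 /\ meets G (cC e) Y1 /\ simS G Y1 Y)).
Definition Inv (g : Ed G) : Prop :=
  (S (cC g) -> Aset (cC g)) /\ (T (cD g) -> Bset (cD g)).

Lemma Inv_e : Inv e.
Proof.
  split; intros H; split; auto; left; split; auto; apply rt_refl.
Qed.

Lemma A_to_B X h : Aset X -> cC h = X -> T (cD h) -> Bset (cD h).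
Proof.
  intros [SX [[Se R]|[Te [X1 [SX1 [M1 R1]]]]]] Hh Th; split; auto.
  - right. split; auto.
    destruct (keyT _ _ (cD h) R Th) as [Y1 [TY1 [M R']]]. exists h; auto.
    eauto.
  - left. split; auto.
    destruct (keyT _ _ (cD h) R1 Th) as [Y1 [TY1 [M R']]]. exists h; auto.
    eapply rt_trans; [apply rt_step|exact R'].
    split; [|split]; auto. exists X1; auto.
Qed.

Lemma B_to_A Y h : Bset Y -> cD h = Y -> S (cC h) -> Aset (cC h).
Proof.
  intros [TY [[Te R]|[Se [Y1 [TY1 [M1 R1]]]]]] Hh Sh; split; auto.
  - right. split; auto.
    destruct (keyS _ _ (cC h) R Sh) as [X1 [SX1 [M R']]]. exists h; auto.
    eauto.
  - left. split; auto.
    destruct (keyS _ _ (cC h) R1 Sh) as [X1 [SX1 [M R']]]. exists h; auto.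
    eapply rt_trans; [apply rt_step|exact R'].
    split; [|split]; auto. exists Y1; auto.
Qed.

Lemma Inv_adj g h : Inv g -> adj g h -> Inv h.
Proof.
  intros [IA IB] [[Sg E]|[Tg E]].
  - assert (Ag := IA Sg). split.
    + intros _. rewrite <- E. auto.
    + intros Th. eapply A_to_B; eauto.
  - assert (Bg := IB Tg). split.
    + intros Sh. eapply B_to_A; eauto.
    + intros _. rewrite <- E. auto.
Qed.

Lemma Inv_clo x y : clos_refl_trans _ adj x y -> Inv x -> Inv y.
Proof. induction 1; eauto using Inv_adj. Qed.

Lemma clo_shape h : clos_refl_trans _ adj e h ->
  h = e \/ (S (cC h) /\ Aset (cC h)) \/ (T (cD h) /\ Bset (cD h)).
Proof.
  intros H. apply clos_rt_rtn1 in H. destruct H as [|g h' Ha Hr]; auto.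
  apply clos_rtn1_rt in Hr. assert (Ig := Inv_clo _ _ Hr Inv_e).
  destruct Ig as [IA IB]. right.
  destruct Ha as [[Sg E]|[Tg E]].
  - left. rewrite <- E. auto.
  - right. rewrite <- E. auto.
Qed.

Hypothesis tameG : tame G.

Lemma Aset_fin : fin_pred Aset.
Proof.
  apply fin_sub with (P := fun X => (S (cC e) /\ simT G (cC e) X) \/
     (exists f, (T (cD e) /\ cD f = cD e /\ S (cC f)) /\ simT G (cC f) X)).
  - apply fin_union.
    + destruct (classic (S1 G (cC e))) as [H1|H1].
      * apply fin_sub with (P := fun X => simT G (cC e) X).
        apply (proj1 tameG); auto. intros a [_ H]; auto.
      * apply fin_sub with (P := fun X => X = cC e). apply fin_single.
        intros a [_ H]. destruct (simT_S1 _ _ H); tauto.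
    + apply fin_big.
      * destruct (classic (T (cD e))) as [Te|Te].
        -- apply fin_sub with (P := fun f => cD f = cD e).
           apply (T_fin G); auto. intros a [_ [H _]]; auto.
        -- apply fin_sub with (P := fun _ => False). apply fin_empty.
           intros a [H _]; auto.
      * intros f [Te [Hf Sf]]. apply (proj1 tameG). split; auto.
        exists (cD e). split; auto. exists f; auto.
  - intros X [SX [H|[Te [X1 [SX1 [[f [f1 f2]] R]]]]]]; auto.
    right. exists f. subst. auto.
Qed.

Lemma Bset_fin : fin_pred Bset.
Proof.
  apply fin_sub with (P := fun Y => (T (cD e) /\ simS G (cD e) Y) \/
     (exists f, (S (cC e) /\ cC f = cC e /\ T (cD f)) /\ simS G (cD f) Y)).
  - apply fin_union.
    + destruct (classic (T1 G (cD e))) as [H1|H1].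
      * apply fin_sub with (P := fun Y => simS G (cD e) Y).
        apply (proj2 tameG); auto. intros a [_ H]; auto.
      * apply fin_sub with (P := fun Y => Y = cD e). apply fin_single.
        intros a [_ H]. destruct (simS_T1 _ _ H); tauto.
    + apply fin_big.
      * destruct (classic (S (cC e))) as [Se|Se].
        -- apply fin_sub with (P := fun f => cC f = cC e).
           apply (S_fin G); auto. intros a [_ [H _]]; auto.
        -- apply fin_sub with (P := fun _ => False). apply fin_empty.
           intros a [H _]; auto.
      * intros f [Se [Hf Tf]]. apply (proj2 tameG). split; auto.
        exists (cC e). split; auto. exists f; auto.
  - intros Y [TY [H|[Se [Y1 [TY1 [[f [f1 f2]] R]]]]]]; auto.
    right. exists f. subst. auto.
Qed.

Lemma clo_fin : fin_pred (clos_refl_trans _ adj e).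
Proof.
  apply fin_sub with (P := fun h => h = e \/ ((exists X, Aset X /\ cC h = X) \/
                                            (exists Y, Bset Y /\ cD h = Y))).
  - apply fin_union. apply fin_single. apply fin_union.
    + apply fin_big. apply Aset_fin. intros X [SX _]. apply (S_fin G); auto.
    + apply fin_big. apply Bset_fin. intros Y [TY _]. apply (T_fin G); auto.
  - intros h H. destruct (clo_shape h H) as [H1|[[_ H1]|[_ H1]]]; eauto.
Qed.

End Fwd.

Definition edge_sub (G : BiSepGraph) (Z : Ed G -> Prop) : subgraph G.
Proof.
  refine {| sV := fun v => exists g, Z g /\ (src g = v \/ rng g = v); sE := Z |};
  intros g Hg; exists g; auto.
Defined.

Definition union_sub (G : BiSepGraph) (H K : subgraph G) : subgraph G.
Proof.
  refine {| sV := fun v => sV H v \/ sV K v; sE := fun g => sE H g \/ sE K g |};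
  intros g [Hg|Hg]; [left|right|left|right];
  first [apply (sE_src _ H) | apply (sE_src _ K) | apply (sE_rng _ H) | apply (sE_rng _ K)]; auto.
Defined.

Definition vert_sub (G : BiSepGraph) (P : V G -> Prop) : subgraph G.
Proof.
  refine {| sV := P; sE := fun _ => False |}; intros g [].
Defined.

Lemma edge_sub_ok (G : BiSepGraph) e : tame G ->
  complete_sub G (edge_sub G (clos_refl_trans _ (adj G) e)) /\
  finite_sub G (edge_sub G (clos_refl_trans _ (adj G) e)).
Proof.
  intros tG. split; [split|split]; simpl.
  - intros X SX [f [<- Hf]] g Hg. eapply rt_trans; [exact Hf|].
    apply rt_step. left. auto.
  - intros Y TY [f [<- Hf]] g Hg. eapply rt_trans; [exact Hf|].
    apply rt_step. right. auto.
  - destruct (clo_fin G e tG) as [l Hl].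
    exists (flat_map (fun g => [src g; rng g]) l).
    intros v [g [Hg Hv]]. apply in_flat_map. exists g. split; auto.
    destruct Hv as [<-|<-]; simpl; auto.
  - apply clo_fin; auto.
Qed.

Lemma union_ok (G : BiSepGraph) H K :
  complete_sub G H /\ finite_sub G H -> complete_sub G K /\ finite_sub G K ->
  complete_sub G (union_sub G H K) /\ finite_sub G (union_sub G H K).
Proof.
  intros [[H1 H2] [H3 H4]] [[K1 K2] [K3 K4]].
  split; [split|split]; simpl; try (apply fin_union; auto).
  - intros X SX [f [Hf [Hh|Hk]]] g Hg; [left; apply (H1 X)|right; apply (K1 X)]; eauto.
  - intros Y TY [f [Hf [Hh|Hk]]] g Hg; [left; apply (H2 Y)|right; apply (K2 Y)]; eauto.
Qed.

Lemma vert_ok (G : BiSepGraph) v :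
  complete_sub G (vert_sub G (fun w => w = v)) /\ finite_sub G (vert_sub G (fun w => w = v)).
Proof.
  split; [split|split]; simpl.
  - intros X _ [f [_ []]].
  - intros Y _ [f [_ []]].
  - apply fin_single.
  - apply fin_empty.
Qed.

Theorem mainTheorem1 (G : BiSepGraph) :
  tame G <-> union_of_finite_complete G.
Proof.
  split; [|apply converse].
  intros tG.
  exists {H : subgraph G | complete_sub G H /\ finite_sub G H}.
  exists (fun x => proj1_sig x).
  split; [|split; [|split; [|split]]].
  - constructor. exists (vert_sub G (fun _ => False)).
    split; [split|split]; simpl.
    + intros X _ [f [_ []]].
    + intros Y _ [f [_ []]].
    + apply fin_empty.
    + apply fin_empty.
  - intros [H p]. exact p.
  - intros [H p] [K q]. exists (exist _ (union_sub G H K) (union_ok G H K p q)).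
    simpl. split; split; simpl; auto.
  - intros v. exists (exist (fun H => complete_sub G H /\ finite_sub G H) _ (vert_ok G v)). simpl. auto.
  - intros e. exists (exist (fun H => complete_sub G H /\ finite_sub G H) _ (edge_sub_ok G e tG)). simpl. apply rt_refl.
Qed.
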